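(* Let $G$ be a graph, $f,p\ge 1$ integers, $\beta\ge0$. The graph $H$ returned by Algorithm 1 (described in the context), when $A_S$ is a $\beta$-additive $f$-EFT (resp. $f$-VFT) sourcewise spanner with respect to the computed source set $S$, is a $(\beta+2)$-additive $f$-EFT (resp. $f$-VFT) spanner of $G$: for every set $F$ of at most $f$ edges (resp. vertices) and all $s,t\in V(G)$ (not in $F$ in the vertex case) connected in $G-F$, $d_{H-F}(s,t)\le d_{G-F}(s,t)+\beta+2$.
   Context: $d_X(u,v)$ is the shortest-path distance in $X$; $X-F$ removes the edges (resp. the vertices and their incident edges) in $F$. Algorithm 1 (input: graph $G$, integers $f,p\ge1$, and a value $\beta$). Initially every vertex is colored white and has $\mathrm{counter}(v)=f+1$; $S=\emptyset$, $E'=\emptyset$. For a vertex $u$, let $N_w(u)$ be the set of currently white neighbors of $u$ and $\delta_w(u)=|N_w(u)|$. While there exists $s\in V\setminus S$ with $\delta_w(s)\ge p$: add $s$ to $S$, color $s$ red, and for each $u\in N_w(s)$ decrement $\mathrm{counter}(u)$, add edge $(s,u)$ to $E'$, and if $\mathrm{counter}(u)=0$ color $u$ black. After the loop, add to $E'$ every edge $(u,v)\in E(G)$ such that $u$ is white. Let $A_S$ be a $\beta$-additive $f$-EFT (resp. $f$-VFT) sourcewise spanner of $G$ with respect to $S$, i.e. a subgraph such that for every set $F$ of at most $f$ edges (resp. vertices) and every $s\in S$, $v\in V(G)$, $d_{A_S-F}(s,v)\le d_{G-F}(s,v)+\beta$. Return $H=(V(G),E'\cup E(A_S))$. *)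

(* Defs.v *)
(* Simple graph on a finite vertex type T, given by a
   symmetric irreflexive relation e. *)
From mathcomp Require Import all_boot.
Set Implicit Arguments. Unset Strict Implicit. Unset Printing Implicit Defensive.

Section Alg.
Variable T : finType.

Definition dist_le (g : rel T) (u v : T) (k : nat) : Prop :=
  exists q : seq T, [/\ path g u q, last u q = v & size q <= k].

(* g - F for a set F of edges (unordered pairs, given as a list of pairs). *)
Definition rmE (F : seq (T * T)) (g : rel T) : rel T :=
  fun x y => [&& g x y, (x, y) \notin F & (y, x) \notin F].

Definition rmV (F : seq T) (g : rel T) : rel T :=
  fun x y => [&& g x y, x \notin F & y \notin F].

Definition EFT_sourcewise (g A : rel T) (S : seq T) (f beta : nat) : Prop :=
  forall F : seq (T * T), size F <= f ->
  forall s v k, s \in S -> dist_le (rmE F g) s v k -> dist_le (rmE F A) s v (k + beta).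

Definition VFT_sourcewise (g A : rel T) (S : seq T) (f beta : nat) : Prop :=
  forall F : seq T, size F <= f ->
  forall s v k, s \in S -> s \notin F -> v \notin F ->
  dist_le (rmV F g) s v k -> dist_le (rmV F A) s v (k + beta).

Definition EFT_spanner (g H : rel T) (f beta : nat) : Prop :=
  forall F : seq (T * T), size F <= f ->
  forall s t k, dist_le (rmE F g) s t k -> dist_le (rmE F H) s t (k + beta).

Definition VFT_spanner (g H : rel T) (f beta : nat) : Prop :=
  forall F : seq T, size F <= f ->
  forall s t k, s \notin F -> t \notin F ->
  dist_le (rmV F g) s t k -> dist_le (rmV F H) s t (k + beta).

(* State of Algorithm 1: source list S (= red vertices), counters, E'. *)
Record state := State { sS : seq T; cnt : T -> nat; ed : rel T }.

Definition init_state (f : nat) : state :=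
  State [::] (fun _ => f.+1) (fun _ _ => false).

(* white = neither red (in S) nor black (counter 0) *)
Definition white (st : state) (u : T) : bool := (u \notin sS st) && (0 < cnt st u).

Definition Nw (e : rel T) (st : state) (s u : T) : bool := e s u && white st u.

Definition deg_w (e : rel T) (st : state) (s : T) : nat := #|[pred u | Nw e st s u]|.

Definition step (e : rel T) (st : state) (s : T) : state :=
  State (s :: sS st)
        (fun u => if Nw e st s u then (cnt st u).-1 else cnt st u)
        (fun x y => [|| ed st x y, (x == s) && Nw e st s y | (y == s) && Nw e st s x]).

(* ss is a legal sequence of choices of the while loop from st, and the
   loop condition fails after the last one. *)
Fixpoint valid_run (e : rel T) (p : nat) (st : state) (ss : seq T) : Prop :=
  match ss with
  | [::] => forall s, s \notin sS st -> deg_w e st s < p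
  | s :: ss' => [/\ s \notin sS st, p <= deg_w e st s & valid_run e p (step e st s) ss']
  end.

Definition final_state (e : rel T) (f : nat) (ss : seq T) : state :=
  foldl (step e) (init_state f) ss.

Definition Eprime (e : rel T) (st : state) : rel T :=
  fun x y => ed st x y || (e x y && (white st x || white st y)).

Definition output (e : rel T) (st : state) (A : rel T) : rel T :=
  fun x y => Eprime e st x y || A x y.

End Alg.

(* Main.v *)
Require Import Defs.
From mathcomp Require Import all_boot.
From mathcomp Require Import zify.
Set Implicit Arguments. Unset Strict Implicit. Unset Printing Implicit Defensive.

Section Proofs.
Variable T : finType.
Variable e : rel T.
Hypothesis esym : symmetric e.
Hypothesis eirr : irreflexive e.
Variable f : nat.

Definition Inv (st : state T) : Prop :=
  [/\ forall x y, ed st x y = ed st y x,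
      forall x y, ed st x y -> e x y &
      forall u, u \notin sS st ->
        f.+1 <= #|[pred x | (x \in sS st) && ed st x u]| + cnt st u].

Lemma Inv_init : Inv (init_state T f).
Proof.
split => // u _ /=.
by rewrite addnC leq_addr.
Qed.

Lemma Inv_step st s : Inv st -> s \notin sS st -> Inv (step e st s).
Proof.
case=> Hsym He Hc sS_notin; split.
- move=> x y /=. rewrite Hsym.
  by case: (ed st y x); case: ((x == s) && _); case: ((y == s) && _).
- move=> x y /= /or3P [/He //| /andP[/eqP -> /andP[H _]] // | /andP[/eqP -> /andP[H _]]].
  by rewrite esym.
- move=> u /=; rewrite in_cons negb_or => /andP[nus nuS].
  have Hu := Hc u nuS.
  have sub : [pred x | (x \in sS st) && ed st x u] \subset
             [pred x | (x \in s :: sS st) &&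
                [|| ed st x u, (x == s) && Nw e st s u | (u == s) && Nw e st s x]].
    apply/subsetP => x; rewrite !inE => /andP[-> ->]; by rewrite orbT.
  case: ifP => Hnw.
  + have: [pred x | (x \in sS st) && ed st x u] \proper
          [pred x | (x \in s :: sS st) &&
             [|| ed st x u, (x == s) && Nw e st s u | (u == s) && Nw e st s x]].
      apply/properP; split => //; exists s; first by rewrite !inE eqxx Hnw /= orbT.
      by rewrite !inE (negbTE sS_notin).
    move/proper_card => Hlt. rewrite Hnw in Hlt.
    have Hc0 : 0 < cnt st u by move: Hnw => /andP[_ /andP[_]].
    move: Hu Hlt Hc0; set N := #|[pred x in s :: sS st | _]|; set M := #|[pred x in sS st | _]|; case: (cnt st u) => [|c] /=; lia.
  + move/subset_leq_card: sub => Hle. rewrite Hnw in Hle. move: Hu Hle; set N := #|[pred x in s :: sS st | _]|; set M := #|[pred x in sS st | _]|; lia.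
Qed.

Lemma Inv_run p st ss : Inv st -> valid_run e p st ss -> Inv (foldl (step e) st ss).
Proof.
elim: ss st => [|s ss IH] st //= Hi [Hn _ Hv].
exact: IH (Inv_step Hi Hn) Hv.
Qed.

End Proofs.

Lemma dist_le_mono (T : finType) (g1 g2 : rel T) u v k :
  subrel g1 g2 -> dist_le g1 u v k -> dist_le g2 u v k.
Proof.
move=> Hs [q [pq lq sq]]; exists q; split => //; exact: sub_path pq.
Qed.

Lemma dist_le_weak (T : finType) (g : rel T) u v k k' :
  k <= k' -> dist_le g u v k -> dist_le g u v k'.
Proof.
move=> Hk [q [pq lq sq]]; exists q; split => //; exact: leq_trans sq Hk.
Qed.

Lemma key (T : finType) (g h : rel T) (ok : pred T) b :
  (forall x y, g x y -> ~~ h x y -> exists s',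
     (forall v k, ok v -> dist_le g s' v k -> dist_le h s' v (k + b)) /\
     (s' = x \/ (h x s' /\ g s' x))) ->
  forall q s, path g s q -> ok (last s q) ->
  dist_le h s (last s q) (size q + b + 2).
Proof.
move=> Hk; elim=> [|y q IH] s /=.
  by move=> _ _; exists [::]; split.
move=> /andP[gsy pq] okl.
case hsy: (h s y).
- have [q' [pq' lq' sq']] := IH y pq okl.
  exists (y :: q'); split.
  + by rewrite /= hsy pq'.
  + exact: lq'.
  + move: sq' => /=; lia.
- have [s' [Src [Es | [hss gs's]]]] := Hk s y gsy (negbT hsy).
  + subst s'.
    have [|q' [pq' lq' sq']] := Src (last y q) (size (y :: q)) okl.
      by exists (y :: q); split => //=; rewrite gsy pq.
    exists q'; split => //. move: sq' => /=; lia.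
  + have [|q' [pq' lq' sq']] := Src (last y q) (size (s :: y :: q)) okl.
      by exists (s :: y :: q); split => //=; rewrite gs's gsy pq.
    exists (s' :: q'); split.
    * by rewrite /= hss.
    * exact: lq'.
    * move: sq' => /=; lia.
Qed.

Lemma many_avoid (T : finType) (P : pred T) (s : seq T) :
  size s < #|P| -> exists x, P x /\ x \notin s.
Proof.
move=> Hlt.
case: (boolP [exists x, P x && (x \notin s)]).
  by move/existsP => [x /andP[Px Hx]]; exists x.
move=> Hn; exfalso.
have sub : P \subset mem s.
  apply/subsetP => x Px; apply/negPn/negP => Hx.
  by move/negP: Hn; apply; apply/existsP; exists x; apply/andP; split.
have := leq_trans (subset_leq_card sub) (card_size s); move: Hlt; set N := #|P|; lia.
Qed.

Theorem theorem2 (T : finType) (e : rel T) (f p beta : nat) (ss : seq T) :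
  symmetric e -> irreflexive e -> 1 <= f -> 1 <= p ->
  valid_run e p (init_state T f) ss ->
  let st := final_state e f ss in
  (forall A : rel T, symmetric A -> subrel A e ->
     EFT_sourcewise e A (sS st) f beta ->
     EFT_spanner e (output e st A) f (beta + 2)) /\
  (forall A : rel T, symmetric A -> subrel A e ->
     VFT_sourcewise e A (sS st) f beta ->
     VFT_spanner e (output e st A) f (beta + 2)).
Proof.
move=> esym eirr f1 p1 Hrun st.
have [Hsym He Hc] : Inv e f st := Inv_run esym (Inv_init e f) Hrun.
split.
- move=> A _ _ HA F HF s t k [q [pq lq sq]].
  have K := @key T (rmE F e) (rmE F (output e st A)) predT beta _ q s pq isT.
  rewrite lq in K.
  apply: dist_le_weak (K _); first by move: sq; lia.
  move=> x y /and3P[exy nF1 nF2] nh.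
  have Hsrc : forall s', s' \in sS st -> forall v k, predT v ->
      dist_le (rmE F e) s' v k -> dist_le (rmE F (output e st A)) s' v (k + beta).
    move=> s' Hs' v k0 _ Hd; apply: dist_le_mono (HA F HF s' v k0 Hs' Hd).
    by move=> a b /and3P[Aab n1 n2]; rewrite /rmE /output Aab orbT n1 n2.
  case: (boolP (x \in sS st)) => Hx.
    by exists x; split; [exact: Hsrc | left].
  have Hwx : ~~ white st x.
    apply/negP => Hw; move/negP: nh; apply.
    by rewrite /rmE nF1 nF2 /output /Eprime exy Hw !orbT.
  have Hc0 : cnt st x = 0.
    by move: Hwx; rewrite /white Hx /=; lia.
  have Hcnt := Hc x Hx; rewrite Hc0 addn0 in Hcnt.
  pose gg := fun ab : T * T => if ab.1 == x then ab.2 else ab.1.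
  have [s' [/andP[Hs' Hed] Hn]] :
      exists s', [pred z | (z \in sS st) && ed st z x] s' /\ s' \notin map gg F.
    apply: many_avoid; rewrite size_map; apply: leq_trans _ Hcnt; by rewrite ltnS.
  have s'x : s' != x.
    apply/eqP => E; subst s'; by have := He x x Hed; rewrite eirr.
  have n1 : (s', x) \notin F.
    apply/negP => H; move/negP: Hn; apply; apply/mapP; exists (s', x) => //.
    by rewrite /gg /= (negbTE s'x).
  have n2 : (x, s') \notin F.
    apply/negP => H; move/negP: Hn; apply; apply/mapP; exists (x, s') => //.
    by rewrite /gg /= eqxx.
  exists s'; split; first exact: Hsrc.
  right; split.
    by rewrite /rmE n1 n2 /output /Eprime Hsym Hed.
  by rewrite /rmE n1 n2 (He _ _ Hed).
- move=> A _ _ HA F HF s t k nsF ntF [q [pq lq sq]].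
  have okt : [pred z | z \notin F] (last s q) by rewrite lq.
  have K := @key T (rmV F e) (rmV F (output e st A)) [pred z | z \notin F] beta _ q s pq okt.
  rewrite lq in K.
  apply: dist_le_weak (K _); first by move: sq; lia.
  move=> x y /and3P[exy nxF nyF] nh.
  have Hsrc : forall s', s' \in sS st -> s' \notin F -> forall v k,
      [pred z | z \notin F] v ->
      dist_le (rmV F e) s' v k -> dist_le (rmV F (output e st A)) s' v (k + beta).
    move=> s' Hs' ns' v k0 nv Hd; apply: dist_le_mono (HA F HF s' v k0 Hs' ns' nv Hd).
    by move=> a b /and3P[Aab n1 n2]; rewrite /rmV /output Aab orbT n1 n2.
  case: (boolP (x \in sS st)) => Hx.
    by exists x; split; [exact: Hsrc | left].
  have Hwx : ~~ white st x.
    apply/negP => Hw; move/negP: nh; apply.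
    by rewrite /rmV nxF nyF /output /Eprime exy Hw !orbT.
  have Hc0 : cnt st x = 0.
    by move: Hwx; rewrite /white Hx /=; lia.
  have Hcnt := Hc x Hx; rewrite Hc0 addn0 in Hcnt.
  have [s' [/andP[Hs' Hed] Hn]] :
      exists s', [pred z | (z \in sS st) && ed st z x] s' /\ s' \notin F.
    apply: many_avoid; apply: leq_trans _ Hcnt; by rewrite ltnS.
  exists s'; split; first exact: Hsrc.
  right; split.
    by rewrite /rmV Hn nxF /output /Eprime Hsym Hed.
  by rewrite /rmV Hn nxF (He _ _ Hed).
Qed.
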